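(* Let $T$ be a locally compact Hausdorff space and $\tau : T\to T$ a proper local homeomorphism. Then $(T,\tau)$ is topologically free if and only if the topological graph $E = (T,T,\tau,\mathrm{id})$ is topologically free.
   Context: $(T,\tau)$ is topologically free if for all $m\neq n\in\mathbb{N}$ the set $H_{m,n} := \{t\in T : \tau^m(t) = \tau^n(t)\}$ has empty interior. The topological graph $E = (E^0,E^1,d,r)$ has vertex space $E^0 = T$, edge space $E^1 = T$, source map $d = \tau$ and range map $r = \mathrm{id}$. A path of length $n\ge1$ in $E$ is $e = (e_1,\dots,e_n)$ with $e_k\in E^1$ and $d(e_k) = r(e_{k+1})$; it is a loop if $r(e_1) = d(e_n)$, with base point $r(e_1)$. An entry of a loop $e$ is an edge $f\in E^1$ with $r(f) = r(e_k)$ and $f\neq e_k$ for some $k$. The topological graph $E$ is topologically free if the set of base points of loops without entries has empty interior in $E^0$. *)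

(* Defs.v *)
From HB Require Import structures.
From mathcomp Require Import all_boot all_order.
From mathcomp Require Import all_classical all_reals all_analysis.
Set Implicit Arguments. Unset Strict Implicit. Unset Printing Implicit Defensive.
Local Open Scope classical_set_scope.

Definition proper_map (T U : topologicalType) (f : T -> U) : Prop :=
  continuous f /\ forall K : set U, compact K -> compact (f @^-1` K).

(* A local homeomorphism: continuous, and every point has an open
   neighbourhood U such that f(U) is open and f restricted to U is a
   homeomorphism onto f(U) (i.e. injective on U and open on U). *)
Definition local_homeomorphism (T U : topologicalType) (f : T -> U) : Prop :=
  continuous f /\
  forall x : T, exists V : set T,
    [/\ open V, V x, open (f @` V), {in V &, injective f} &
        forall W : set T, open W -> W `<=` V -> open (f @` W)].

Definition H_set (T : Type) (tau : T -> T) (m n : nat) : set T :=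
  [set t | iter m tau t = iter n tau t].

Definition dyn_topologically_free (T : topologicalType) (tau : T -> T) : Prop :=
  forall m n : nat, m <> n -> interior (H_set tau m n) = set0.

(* Topological graphs E = (E0, E1, d, r).  A path of length n >= 1 is
   encoded as a function e : nat -> E1 whose relevant entries are
   e 0, ..., e (n-1) (i.e. e_1, ..., e_n in the paper's indexing). *)
Definition graph_path (E0 E1 : Type) (d r : E1 -> E0) (n : nat) (e : nat -> E1) : Prop :=
  (1 <= n)%N /\ forall k : nat, (k.+1 < n)%N -> d (e k) = r (e k.+1).

Definition graph_loop (E0 E1 : Type) (d r : E1 -> E0) (n : nat) (e : nat -> E1) : Prop :=
  graph_path d r n e /\ r (e 0%N) = d (e n.-1).

Definition has_entry (E0 E1 : Type) (d r : E1 -> E0) (n : nat) (e : nat -> E1) : Prop :=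
  exists (f : E1) (k : nat), (k < n)%N /\ r f = r (e k) /\ f <> e k.

Definition base_points_loops_without_entries (E0 E1 : Type) (d r : E1 -> E0) : set E0 :=
  [set v | exists (n : nat) (e : nat -> E1),
     [/\ graph_loop d r n e, ~ has_entry d r n e & r (e 0%N) = v]].

Definition graph_topologically_free (E0 : topologicalType) (E1 : Type) (d r : E1 -> E0) : Prop :=
  interior (base_points_loops_without_entries d r) = set0.

(* Main.v *)
Require Import Defs.
From mathcomp Require Import all_boot all_order.
From mathcomp Require Import all_classical all_reals all_analysis.
Local Open Scope classical_set_scope.

Lemma iter_cont (T : topologicalType) (tau : T -> T) :
  continuous tau -> forall n, continuous (iter n tau).
Proof.
move=> ct; elim=> [|n IH] x /=; first exact: cvg_id.
exact: (continuous_comp (IH x) (ct _)).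
Qed.

Lemma fixed_closed (T : topologicalType) (g : T -> T) :
  hausdorff_space T -> continuous g -> closed [set t | g t = t].
Proof.
move=> hT cg t ct; apply: hT => A B /= nA nB.
have ng : nbhs t (g @^-1` A) := cg t _ nA.
have [s [/= gs [sB sA]]] := ct _ (filterI nB ng).
by exists s; split => //; rewrite -gs.
Qed.

Lemma open_map (T : topologicalType) (tau : T -> T) :
  local_homeomorphism tau -> forall W, open W -> open (tau @` W).
Proof.
move=> [_ hl] W oW; rewrite openE => _ [w Ww <-].
have [V [oV Vw _ _ hV]] := hl w.
have o2 : open (tau @` (W `&` V)) by apply: hV; [exact: openI|exact: subIsetr].
apply: (@filterS _ _ _ (tau @` (W `&` V))).
  by move=> _ [u [Wu _] <-]; exists u.
by apply: open_nbhs_nbhs; split => //; exists w.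
Qed.

Lemma open_map_iter (T : topologicalType) (tau : T -> T) :
  local_homeomorphism tau -> forall n W, open W -> open (iter n tau @` W).
Proof.
move=> hl; elim=> [|n IH] W oW.
  by rewrite image_id.
have -> : iter n.+1 tau @` W = tau @` (iter n tau @` W).
  apply/seteqP; split => y.
    by move=> [x Wx <-]; exists (iter n tau x) => //; exists x.
  by move=> [_ [x Wx <-] <-]; exists x.
exact/open_map/IH.
Qed.

Lemma base_pointsP (T : Type) (tau : T -> T) v :
  base_points_loops_without_entries tau (fun t : T => t) v <->
  exists n, (0 < n)%N /\ iter n tau v = v.
Proof.
split.
  move=> [n [e [[[n1 hp] hl] _ <-]]].
  exists n; split => //.
  have he : forall k, (k < n)%N -> e k = iter k tau (e 0%N).
    elim=> [|k IH] hk //=; rewrite -IH ?(ltnW hk) //; symmetry; exact: hp.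
  case: n n1 hp hl he => // n _ hp hl he /=.
  by rewrite -he // hl.
move=> [n [n0 hn]]; exists n, (fun k => iter k tau v); split => //.
- split; first by split => // k _.
  by case: n n0 hn => // n _ hn /=.
- by move=> [f [k [_ [-> ]]]].
Qed.

Lemma cpt_nbhs (T : topologicalType) : locally_compact [set: T] ->
  forall y : T, exists K, [/\ nbhs y K, compact K & closed K].
Proof.
move=> hlc y; have [K hK [cK clK]] := hlc y I.
by exists K; split => //; move: hK; rewrite withinET.
Qed.

Lemma baire_step (T : topologicalType) (D : set T) :
  hausdorff_space T -> locally_compact [set: T] -> closed D -> D° = set0 ->
  forall W : set T, open W -> W !=set0 ->
  exists V : set T, [/\ open V, V !=set0 & closure V `<=` W `\` D].
Proof.
move=> hT hlc clD iD W oW [w Ww].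
have [y [Wy nDy]] : (W `\` D) !=set0.
  apply: contrapT => hne; have WD : W `<=` D.
    move=> x Wx; apply: contrapT => nDx; apply: hne; by exists x.
  have : D° w by rewrite openE in oW; apply: (filterS WD); exact: oW.
  by rewrite iD.
have [K [nK cK _]] := @cpt_nbhs T hlc y.
have oWD : open (W `\` D) by apply: openI => //; exact: closed_openC.
have nWD : nbhs y (W `\` D) by apply: open_nbhs_nbhs; split.
have [i ni ci] := compact_regular hT cK nK nWD.
exists i°; split; first exact: open_interior.
  by exists y; exact: ni.
apply: subset_trans ci; apply: closureS; exact: interior_subset.
Qed.

Lemma baire_lc (T : topologicalType) (C : nat -> set T) (P : set T) :
  hausdorff_space T -> locally_compact [set: T] -> (forall k, closed (C k)) ->
  P `<=` (fun x => exists k, C k x) -> P° !=set0 -> exists k, (C k)° !=set0.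
Proof.
move=> hT hlc clC PC [x0 Px0].
apply: contrapT => hne.
have iC : forall k, (C k)° = set0.
  move=> k; apply/seteqP; split => // z Cz; apply: hne; exists k; by exists z.
have st : forall p : nat * set T, exists V : set T,
    open p.2 -> p.2 !=set0 -> [/\ open V, V !=set0 & closure V `<=` p.2 `\` C p.1].
  move=> [k W] /=; have [oW|noW] := pselect (open W); last by exists set0.
  have [ne|nne] := pselect (W !=set0); last by exists set0.
  have [V hV] := @baire_step T _ hT hlc (clC k) (iC k) W oW ne.
  by exists V.
have [g hg] := choice st.
have [K [nK cK clK]] := @cpt_nbhs T hlc x0.
pose U0 := P° `&` K°.
pose U := fix U n := if n is k.+1 then g (k, U k) else U0.
have hU : forall k, open (U k) /\ U k !=set0.
  elim=> [|k [oU neU]] /=.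
    split; first by apply: openI; exact: open_interior.
    by exists x0; split => //; exact: nbhs_interior.
  by have [] := hg (k, U k) oU neU.
have cU : forall k, closure (U k.+1) `<=` U k `\` C k.
  by move=> k; have [oU neU] := hU k; have [] := hg (k, U k) oU neU.
have sU : forall k, U k.+1 `<=` U k.
  move=> k z Uz; have : closure (U k.+1) z by exact: subset_closure.
  by move/cU => [].
have mU : forall i j, (i <= j)%N -> U j `<=` U i.
  move=> i j /subnK <-; elim: (j - i)%N => [|n IH]; first by rewrite add0n.
  by rewrite addSn; apply: subset_trans (sU _) IH.
pose F := filter_from [set: nat] U.
have fF : Filter F.
  apply: filter_from_filter; first by exists 0%N.
  move=> i j _ _; exists (maxn i j) => //; rewrite subsetI; split.
    by apply: mU; exact: leq_maxl.
  by apply: mU; exact: leq_maxr.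
have pF : ProperFilter F.
  by apply: filter_from_proper => k _; have [] := hU k.
have FK : F K.
  exists 0%N => // z [_ Kz]; exact: interior_subset.
have [p [Kp clp]] := cK F pF FK.
have inU : forall k, closure (U k) p.
  by move=> k B nB; apply: clp => //; exists k.
have [U0p' _] : U0 p by have := cU 0%N p (inU 1%N); move=> [].
have [k Ck] := PC p (interior_subset U0p').
by have [_] := cU k p (inU k.+1).
Qed.

Lemma dir_lt (T : topologicalType) (tau : T -> T) (m n : nat) :
  local_homeomorphism tau -> (m < n)%N ->
  graph_topologically_free (E0 := T) (E1 := T) tau (fun t : T => t) ->
  forall x, ~ (H_set tau m n)° x.
Proof.
move=> hl mn gf x Hx.
pose W := (H_set tau m n)°.
have oV : open (iter m tau @` W) by apply: open_map_iter => //; exact: open_interior.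
have VB : iter m tau @` W `<=` base_points_loops_without_entries tau (fun t : T => t).
  move=> _ [w Ww <-]; apply/base_pointsP; exists (n - m)%N; split.
    by rewrite subn_gt0.
  rewrite -iterD subnK ?(ltnW mn) //.
  by have := interior_subset Ww; rewrite /H_set /= => ->.
have : (base_points_loops_without_entries tau (fun t : T => t))° (iter m tau x).
  apply: (filterS VB); apply: open_nbhs_nbhs; split => //; by exists x.
by rewrite gf.
Qed.

Theorem lemma6p2 (T : topologicalType) (tau : T -> T)
  (hT : hausdorff_space T) (hlc : locally_compact [set: T])
  (hprop : proper_map tau) (hloc : local_homeomorphism tau) :
  dyn_topologically_free tau <->
  graph_topologically_free (E0 := T) (E1 := T) tau (fun t : T => t).
Proof.
split.
- move=> df; rewrite /graph_topologically_free.
  apply/seteqP; split => // x Bx.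
  have PC : base_points_loops_without_entries tau (fun t : T => t) `<=`
      (fun t => exists k, [set t | iter k.+1 tau t = t] t).
    move=> t /base_pointsP [[|n] [n0 hn]] //; by exists n.
  have [k [z Cz]] := @baire_lc T (fun k => [set t | iter k.+1 tau t = t])
     (base_points_loops_without_entries tau (fun t : T => t)) hT hlc
     (fun k => @fixed_closed T _ hT (@iter_cont T tau hloc.1 k.+1)) PC (ex_intro _ x Bx).
  have := df k.+1 0%N (fun e : k.+1 = 0%N => ltac:(discriminate e)); rewrite /H_set /= => E.
  by move: Cz; rewrite E.
- move=> gf m n mn; apply/seteqP; split => // x Hx.
  have [lt|gt|e] := ltngtP m n; last by exfalso; exact: mn e.
    exact: (@dir_lt T tau m n hloc lt gf x Hx).
  apply: (@dir_lt T tau n m hloc gt gf x).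
  have -> : H_set tau n m = H_set tau m n by apply/seteqP; split => y; rewrite /H_set /= => ->.
  exact: Hx.
Qed.
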